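(* Let $G$ and $H$ be connected graphs with $\partial(G)=\sigma(G)$ and $\partial(H)=\sigma(H)$. Then $$dim_s(G\square H)=\min\{|\partial(G)|(|\partial(H)|-1),\ |\partial(H)|(|\partial(G)|-1)\}.$$
   Context: Graphs are finite, simple, undirected; $d_G$ is the shortest-path distance. A vertex is simplicial if its neighbors induce a complete graph; $\sigma(G)$ is the set of simplicial vertices. A vertex $u$ is maximally distant from $v$ if $d_G(v,w)\le d_G(u,v)$ for every neighbor $w$ of $u$; distinct $u,v$ are mutually maximally distant if each is maximally distant from the other; the boundary $\partial(G)$ is the set of vertices mutually maximally distant with some vertex. $I_G[u,v]$ is the set of vertices on some shortest $u$–$v$ path; $w$ strongly resolves $u,v$ if $v\in I_G[u,w]$ or $u\in I_G[v,w]$; $dim_s(G)$ is the minimum size of a set $S\subseteq V(G)$ such that every pair of vertices is strongly resolved by some vertex of $S$. $G\square H$ is the Cartesian product: vertex set $V(G)\times V(H)$, $(a,b)\sim(c,d)$ iff ($a=c$ and $bd\in E(H)$) or ($b=d$ and $ac\in E(G)$). *)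

(* Defs.v *)
From mathcomp Require Import all_boot all_order.
Set Implicit Arguments. Unset Strict Implicit. Unset Printing Implicit Defensive.

Section Graphs.
Variable T : finType.
Variable e : rel T.

Definition simple_graph := symmetric e /\ irreflexive e.
Definition connected_graph := forall x y : T, connect e x y.

Fixpoint nreach (n : nat) (x y : T) : bool :=
  if n is n'.+1 then [exists z, e x z && nreach n' z y] else x == y.

(* shortest-path distance: least n with a walk of length n
   (every shortest path has < #|T| edges; returns #|T| if unreachable,
   which never happens for connected graphs) *)
Definition dist (x y : T) : nat := find (fun n => nreach n x y) (iota 0 #|T|).

Definition simplicial (v : T) : bool :=
  [forall w1, forall w2, (e v w1 && e v w2 && (w1 != w2)) ==> e w1 w2].
Definition simplicial_set : {set T} := [set v | simplicial v].

Definition max_distant (u v : T) : bool :=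
  [forall w, e u w ==> (dist v w <= dist u v)].
Definition mmd (u v : T) : bool := (u != v) && max_distant u v && max_distant v u.
Definition boundary : {set T} := [set u | [exists v, mmd u v]].

Definition interval (u v : T) : {set T} :=
  [set w | dist u w + dist w v == dist u v].
Definition strongly_resolves (w u v : T) : bool :=
  (v \in interval u w) || (u \in interval v w).
Definition strong_resolving (S : {set T}) : bool :=
  [forall u, forall v, (u != v) ==> [exists w in S, strongly_resolves w u v]].
(* strong metric dimension: minimum size of a strong resolving set
   (setT is always strong resolving, so the arg min is well defined) *)
Definition sdim : nat :=
  #|[arg min_(S < setT | strong_resolving S) #|S|]|.
End Graphs.

Definition cart_prod (T1 T2 : finType) (e1 : rel T1) (e2 : rel T2) : rel (T1 * T2) :=
  fun x y => ((x.1 == y.1) && e2 x.2 y.2) || ((x.2 == y.2) && e1 x.1 y.1).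

(* Main.v *)
Require Import Defs.
From mathcomp Require Import all_boot all_order.
From mathcomp Require Import zify.
Set Implicit Arguments. Unset Strict Implicit. Unset Printing Implicit Defensive.

Section Gen.
Variable T : finType.
Variable e : rel T.

Lemma nreach_add a b x y z : nreach e a x y -> nreach e b y z -> nreach e (a + b) x z.
Proof.
elim: a x => [|a IH] x /=; first by move/eqP->.
case/existsP=> w /andP [exw hw] hb; apply/existsP; exists w; rewrite exw /=.
exact: IH.
Qed.

Lemma nreach1 x y : e x y -> nreach e 1 x y.
Proof. by move=> h; apply/existsP; exists y; rewrite h /=. Qed.

Lemma nreachSr n x y : nreach e n.+1 x y -> exists z, nreach e n x z /\ e z y.
Proof.
elim: n x => [|n IH] x.
  case/existsP=> z /andP [xz /eqP <-]; exists x; split => //=.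
case/existsP=> z /andP [xz hz]; have [w [hw wy]] := IH _ hz.
exists w; split => //; apply/existsP; exists z; by rewrite xz.
Qed.

Lemma nreachrS n x y z : nreach e n x z -> e z y -> nreach e n.+1 x y.
Proof. move=> h /nreach1 h1; have := nreach_add h h1; by rewrite addn1. Qed.

Hypothesis esym : symmetric e.

Lemma nreach_sym n x y : nreach e n x y -> nreach e n y x.
Proof.
elim: n x y => [|n IH] x y /=; first by rewrite eq_sym.
case/existsP=> z /andP [xz hz]; apply: (nreachrS (IH _ _ hz)); by rewrite esym.
Qed.

Lemma nreach_connect n x y : nreach e n x y -> connect e x y.
Proof.
elim: n x => [|n IH] x /=; first by move/eqP->.
case/existsP=> z /andP [xz hz]; apply: connect_trans (connect1 xz) (IH _ hz).
Qed.

Lemma path_nreach p x : path e x p -> nreach e (size p) x (last x p).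
Proof.
elim: p x => [|z p IH] x /=; first by [].
case/andP=> xz hp; apply/existsP; exists z; rewrite xz /=; exact: IH.
Qed.

Lemma connect_nreach x y : connect e x y -> exists2 n, n < #|T| & nreach e n x y.
Proof.
case/connectP=> p hp ->; case: (shortenP hp) => q hq uq _.
exists (size q); last exact: path_nreach.
have := card_uniqP uq; rewrite /= => h.
have := max_card (mem (x :: q)); rewrite h /=; done.
Qed.

Hypothesis econ : connected_graph e.

Lemma dist_reach x y : nreach e (dist e x y) x y.
Proof.
have [n hn hr] := connect_nreach (econ x y).
have hh : has (fun n => nreach e n x y) (iota 0 #|T|).
  apply/hasP; exists n => //; by rewrite mem_iota.
have hlt : dist e x y < #|T| by rewrite /dist -[X in _ < X](size_iota 0) -has_find.
have := nth_find 0 hh; by rewrite nth_iota.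
Qed.

Lemma dist_min m x y : nreach e m x y -> dist e x y <= m.
Proof.
move=> hm; have [n hn hr] := connect_nreach (econ x y).
have hh : has (fun n => nreach e n x y) (iota 0 #|T|).
  apply/hasP; exists n => //; by rewrite mem_iota.
have hlt : dist e x y < #|T| by rewrite /dist -[X in _ < X](size_iota 0) -has_find.
rewrite leqNgt; apply/negP => hlt2.
have := before_find 0 hlt2; rewrite nth_iota; last exact: ltn_trans hlt.
by rewrite hm.
Qed.

Lemma dist_sym x y : dist e x y = dist e y x.
Proof.
apply/eqP; rewrite eqn_leq; apply/andP; split; apply: dist_min; apply: nreach_sym; exact: dist_reach.
Qed.

Lemma dist_tri x y z : dist e x z <= dist e x y + dist e y z.
Proof. apply: dist_min; apply: nreach_add; exact: dist_reach. Qed.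

Lemma dist0 x y : (dist e x y == 0) = (x == y).
Proof.
apply/idP/idP.
  move/eqP=> h; have := dist_reach x y; by rewrite h.
move/eqP->; rewrite -leqn0; apply: dist_min => /=; done.
Qed.

Lemma dist_edge x y : e x y -> dist e x y <= 1.
Proof. move=> h; apply: dist_min; exact: nreach1. Qed.


Lemma not_between u v w : max_distant e v u -> w != v ->
  dist e u v + dist e v w != dist e u w.
Proof.
move=> hmd wv; have : dist e v w != 0 by rewrite dist0 eq_sym.
have hr := dist_reach v w.
case: (dist e v w) hr => [|k] //= /existsP [x /andP [vx hx]] _.
have h1 := dist_min hx.
have h2 : dist e u x <= dist e v u := implyP (forallP hmd x) vx.
have h3 := dist_tri u x w. rewrite (dist_sym v u) in h2. lia.
Qed.

Lemma mmd_sym u v : mmd e u v = mmd e v u.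
Proof. by rewrite /mmd eq_sym; case: (v != u); case: (max_distant e u v); case: (max_distant e v u). Qed.

Lemma sr_char (S : {set T}) :
  strong_resolving e S <-> (forall u v, mmd e u v -> (u \in S) || (v \in S)).
Proof.
split.
  move=> hS u v huv; apply/negPn/negP; rewrite negb_or => /andP [uS vS].
  move: huv; rewrite /mmd => /andP [/andP [uv mu] mv].
  have /existsP [w /andP [wS]] := implyP (forallP (forallP hS u) v) uv.
  rewrite /strongly_resolves !inE => /orP [] /eqP h.
    have wv : w != v by apply: contraNneq vS => <-.
    by move: (not_between mv wv); rewrite h eqxx.
  have wu : w != u by apply: contraNneq uS => <-.
  by move: (not_between mu wu); rewrite h eqxx.
move=> hS; apply/forallP => u; apply/forallP => v; apply/implyP => uv.
pose P := fun p : T * T => dist e p.1 p.2 == dist e p.1 u + dist e u v + dist e v p.2.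
have dxx : forall x, dist e x x = 0 by move=> x; apply/eqP; rewrite dist0.
have P0 : P (u, v) by rewrite /P /= !dxx addn0.
case: (arg_maxnP (fun p : T * T => dist e p.1 p.2) P0) => [[x y]] /eqP /= Pxy hmax.
have duv : dist e u v != 0 by rewrite dist0.
have hxv := dist_tri x u v. have hxv2 := dist_tri x v y.
have huy := dist_tri u v y. have huy2 := dist_tri x u y.
have hmm : mmd e x y.
  rewrite /mmd; apply/andP; split; first apply/andP; first split.
  - rewrite -dist0; lia.
  - apply/forallP => x'; apply/implyP => xx'; rewrite leqNgt; apply/negP => hlt.
    have h1 := dist_edge xx'. rewrite dist_sym in h1.
    have h2 := dist_tri x' x u. have h3 := dist_tri x' v y. have h4 := dist_tri x' u v.
    rewrite (dist_sym y x') in hlt.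
    have hP : P (x', y) by rewrite /P /=; apply/eqP; have := dist_tri x' x y; lia.
    have := hmax _ hP; rewrite /=; lia.
  - apply/forallP => y'; apply/implyP => yy'; rewrite leqNgt; apply/negP => hlt.
    have h1 := dist_edge yy'. rewrite (dist_sym y x) in hlt.
    have h2 := dist_tri v y y'. have h3 := dist_tri x v y'.
    have hP : P (x, y') by rewrite /P /=; apply/eqP; have := dist_tri x y y'; lia.
    have := hmax _ hP; rewrite /=; lia.
case/orP: (hS _ _ hmm) => hin; apply/existsP.
  exists x; rewrite hin /= /strongly_resolves !inE; apply/orP; right.
  apply/eqP; rewrite (dist_sym v u) (dist_sym v x) (dist_sym u x); lia.
exists y; rewrite hin /= /strongly_resolves !inE; apply/orP; left.
apply/eqP; lia.
Qed.

Lemma simplicial_md u v : simplicial e u -> u != v -> max_distant e u v.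
Proof.
move=> hs uv; apply/forallP => w; apply/implyP => uw.
have : dist e v u != 0 by rewrite dist0 eq_sym.
have hr := dist_reach v u; rewrite (dist_sym u v).
case: (dist e v u) hr => [|k] // /nreachSr [z [hz zu]] _.
have [zw|zw] := eqVneq z w.
  rewrite -zw; have := dist_min hz; lia.
have ezw : e z w.
  have := forallP (forallP hs z) w; rewrite esym zu uw zw /=; done.
apply: dist_min; exact: nreachrS hz ezw.
Qed.

End Gen.

Section Prod.
Variables (T1 T2 : finType) (e1 : rel T1) (e2 : rel T2).
Hypotheses (s1 : symmetric e1) (s2 : symmetric e2).
Hypotheses (c1 : connected_graph e1) (c2 : connected_graph e2).
Local Notation ep := (cart_prod e1 e2).

Lemma nreach_split n x y : nreach ep n x y ->
  exists a b, [/\ a + b = n, nreach e1 a x.1 y.1 & nreach e2 b x.2 y.2].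
Proof.
elim: n x => [|n IH] x /=.
  move/eqP=> xy; exists 0, 0; by rewrite xy /= !eqxx.
case/existsP=> z /andP [xz hz]; have [a [b [hab ha hb]]] := IH _ hz.
case/orP: xz => /andP [/eqP h1 h2].
  exists a, b.+1; split; first by rewrite addnS hab.
    by rewrite h1.
  by apply/existsP; exists z.2; rewrite h2.
exists a.+1, b; split; first by rewrite addSn hab.
  by apply/existsP; exists z.1; rewrite h2.
by rewrite h1.
Qed.

Lemma nreach_l a g g' h : nreach e1 a g g' -> nreach ep a (g, h) (g', h).
Proof.
elim: a g => [|a IH] g /=; first by move/eqP->.
case/existsP=> z /andP [gz hz]; apply/existsP; exists (z, h).
by rewrite /cart_prod /= gz eqxx orbT /= IH.
Qed.

Lemma nreach_r b g h h' : nreach e2 b h h' -> nreach ep b (g, h) (g, h').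
Proof.
elim: b h => [|b IH] h /=; first by move/eqP->.
case/existsP=> z /andP [hz hzz]; apply/existsP; exists (g, z).
by rewrite /cart_prod /= hz eqxx /= IH.
Qed.

Lemma prod_sym : symmetric ep.
Proof. move=> x y; by rewrite /cart_prod s1 s2 (eq_sym x.1) (eq_sym x.2). Qed.

Lemma prod_con : connected_graph ep.
Proof.
move=> [g h] [g' h']; apply: (@nreach_connect _ _ (dist e1 g g' + dist e2 h h')).
apply: (nreach_add (nreach_l h (dist_reach c1 g g'))).
exact: nreach_r (dist_reach c2 h h').
Qed.

Lemma dist_prod x y : dist ep x y = dist e1 x.1 y.1 + dist e2 x.2 y.2.
Proof.
apply/eqP; rewrite eqn_leq; apply/andP; split.
  apply: (dist_min prod_con); case: x y => [g h] [g' h'] /=.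
  apply: (nreach_add (nreach_l h (dist_reach c1 g g'))).
  exact: nreach_r (dist_reach c2 h h').
have [a [b [<- ha hb]]] := nreach_split (dist_reach prod_con x y).
by apply: leq_add; [apply: (dist_min c1 ha) | apply: (dist_min c2 hb)].
Qed.

Lemma md_prod x y : max_distant ep x y =
  max_distant e1 x.1 y.1 && max_distant e2 x.2 y.2.
Proof.
apply/idP/andP.
  move=> hm; split; apply/forallP => w; apply/implyP => xw.
    have := implyP (forallP hm (w, x.2)); rewrite /cart_prod /= eqxx xw orbT.
    move=> /(_ isT); rewrite !dist_prod /= (dist_sym s2 c2 y.2); lia.
  have := implyP (forallP hm (x.1, w)); rewrite /cart_prod /= eqxx xw /=.
  move=> /(_ isT); rewrite !dist_prod /= (dist_sym s1 c1 y.1); lia.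
case=> h1 h2; apply/forallP => w; apply/implyP; rewrite /cart_prod !dist_prod.
case/orP => /andP [/eqP <- xw].
  have := implyP (forallP h2 w.2) xw; rewrite (dist_sym s1 c1 y.1); lia.
have := implyP (forallP h1 w.1) xw; rewrite (dist_sym s2 c2 y.2); lia.
Qed.

End Prod.

Section Bd.
Variables (T : finType) (e : rel T).
Hypotheses (hs : simple_graph e) (hc : connected_graph e).
Hypothesis hb : boundary e = simplicial_set e.

Lemma has_nb g : exists g', e g g'.
Proof.
case: hs => es ei.
case: (boolP [exists g', e g g']) => [/existsP [g' h]|hn]; first by exists g'.
have : g \in simplicial_set e.
  rewrite inE; apply/forallP => w1; apply/forallP => w2; apply/implyP.
  by move/andP=> [/andP [h _] _]; move: hn; rewrite negb_exists => /forallP /(_ w1); rewrite h.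
rewrite -hb inE => /existsP [v /andP [/andP [gv _] _]].
have : dist e g v != 0 by rewrite (dist0 hc).
have := dist_reach hc g v; case: (dist e g v) => [|k] //= /existsP [z /andP [gz _]] _.
by exists z.
Qed.

Lemma md_neq x y : max_distant e x y -> x != y.
Proof.
case: hs => es ei.
move=> hm; apply/negP => /eqP xy; subst y; have [w xw] := has_nb x.
have := implyP (forallP hm w) xw.
have dxx : dist e x x = 0 by apply/eqP; rewrite (dist0 hc).
rewrite dxx leqn0 (dist0 hc) => /eqP xw'; subst w.
by rewrite ei in xw.
Qed.

Lemma mmd_bd x y : mmd e x y = [&& x != y, x \in boundary e & y \in boundary e].
Proof.
case: hs => es ei.
apply/idP/idP.
  move=> h; have h' := h; rewrite (mmd_sym e x y) in h'.
  rewrite !inE; apply/and3P; split.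
  - by move: h => /andP [/andP []].
  - by apply/existsP; exists y.
  - by apply/existsP; exists x.
case/and3P => xy; rewrite hb !inE => sx sy.
rewrite /mmd xy /= (simplicial_md es hc sx xy) /=.
by apply: (simplicial_md es hc sy); rewrite eq_sym.
Qed.

End Bd.
Section Count.
Variables (T1 T2 : finType) (A : {set T1}) (B : {set T2}).

Definition Cov (S : {set T1 * T2}) := forall x y : T1 * T2,
  x.1 != y.1 -> x.2 != y.2 -> x.1 \in A -> y.1 \in A -> x.2 \in B -> y.2 \in B ->
  (x \in S) || (y \in S).

Lemma indep_bound (C : {set T1 * T2}) : C \subset setX A B ->
  {in C &, forall x y, x != y -> (x.1 == y.1) || (x.2 == y.2)} ->
  #|C| <= maxn #|A| #|B|.
Proof.
move=> sC hC; have [->|[c0 c0C]] := set_0Vmem C; first by rewrite cards0.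
have CAB : forall c, c \in C -> (c.1 \in A) && (c.2 \in B).
  by move=> c cC; have := subsetP sC c cC; rewrite inE.
case: (boolP [exists c in C, c.1 != c0.1]) => [/existsP [c1 /andP [c1C c1n]]|hn].
  have h2 : forall c, c \in C -> c.2 = c0.2.
    move=> c cC; apply/eqP; apply/negP => /negP hc.
    have cc0 : c != c0 by apply: contraNneq hc => ->.
    have := hC _ _ cC c0C cc0; rewrite (negbTE hc) orbF => /eqP hc1.
    have c1c0 : c1 != c0 by apply: contraNneq c1n => ->.
    have := hC _ _ c1C c0C c1c0; rewrite (negbTE c1n) /= => /eqP h12.
    have cc1 : c != c1 by apply: contraNneq c1n => <-; rewrite hc1.
    have := hC _ _ cC c1C cc1; rewrite hc1 h12 eq_sym (negbTE c1n) (negbTE hc) //.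
  rewrite -(@card_in_imset _ _ fst C).
    apply: leq_trans (leq_maxl _ _); apply: subset_leq_card; apply/subsetP => _ /imsetP [c cC ->].
    by case/andP: (CAB c cC).
  move=> c c' h h' hf; by rewrite [c]surjective_pairing [c']surjective_pairing hf (h2 _ h) (h2 _ h').
have h1 : forall c, c \in C -> c.1 = c0.1.
  move=> c cC; apply/eqP; apply/negPn/negP => hc; move/negP: hn; apply.
  by apply/existsP; exists c; rewrite cC.
rewrite -(@card_in_imset _ _ snd C).
  apply: leq_trans (leq_maxr _ _); apply: subset_leq_card; apply/subsetP => _ /imsetP [c cC ->].
  by case/andP: (CAB c cC).
move=> c c' h h' hf; by rewrite [c]surjective_pairing [c']surjective_pairing hf (h1 _ h) (h1 _ h').
Qed.

Lemma cover_lower S : Cov S -> minn (#|A| * (#|B| - 1)) (#|B| * (#|A| - 1)) <= #|S|.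
Proof.
move=> hS; set C := setX A B :\: S.
have hcard := cardsID S (setX A B); rewrite cardsX in hcard.
have hsub : #|setX A B :&: S| <= #|S| by apply: subset_leq_card; apply: subsetIr.
have hC : #|C| <= maxn #|A| #|B|.
  apply: indep_bound; first by apply: subsetDl.
  move=> x y; rewrite !inE => /andP [xS /andP [xA xB]] /andP [yS /andP [yA yB]] xy.
  apply/negPn/negP; rewrite negb_or => /andP [h1 h2].
  by have := hS _ _ h1 h2 xA yA xB yB; rewrite (negbTE xS) (negbTE yS).
rewrite !mulnBr !muln1 (mulnC #|B|).
move: hcard hsub hC; rewrite -/C.
set ab := #|A| * #|B|. set k := #|setX A B :&: S|. set c := #|C|. lia.
Qed.

Lemma cover_up1 : exists2 S, Cov S & #|S| = #|A| * (#|B| - 1).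
Proof.
have [B0|[h0 h0B]] := set_0Vmem B.
  exists set0; last by rewrite cards0 B0 cards0 muln0.
  by move=> x y _ _ _ _ xB; rewrite B0 inE in xB.
exists (setX A (B :\ h0)); last by rewrite cardsX (cardsD1 h0 B) h0B add1n subn1.
move=> x y _ xy xA yA xB yB; rewrite !inE xA yA xB yB /= !andbT.
by case: (eqVneq x.2 h0) => [hx|//]; rewrite -hx eq_sym xy.
Qed.

Lemma cover_up2 : exists2 S, Cov S & #|S| = #|B| * (#|A| - 1).
Proof.
have [A0|[g0 g0A]] := set_0Vmem A.
  exists set0; last by rewrite cards0 A0 cards0 muln0.
  by move=> x y _ _ xA; rewrite A0 inE in xA.
exists (setX (A :\ g0) B); last by rewrite cardsX (cardsD1 g0 A) g0A add1n subn1 mulnC.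
move=> x y xy _ xA yA xB yB; rewrite !inE xA yA xB yB /= !andbT.
by case: (eqVneq x.1 g0) => [hx|//]; rewrite -hx eq_sym xy.
Qed.

End Count.

Theorem corollary17 (T1 T2 : finType) (e1 : rel T1) (e2 : rel T2) :
  simple_graph e1 -> simple_graph e2 ->
  connected_graph e1 -> connected_graph e2 ->
  boundary e1 = simplicial_set e1 -> boundary e2 = simplicial_set e2 ->
  sdim (cart_prod e1 e2) =
  minn (#|boundary e1| * (#|boundary e2| - 1)) (#|boundary e2| * (#|boundary e1| - 1)).
Proof.
move=> hs1 hs2 hc1 hc2 hb1 hb2.
have [es1 ei1] := hs1; have [es2 ei2] := hs2.
have mmdp : forall x y, mmd (cart_prod e1 e2) x y = mmd e1 x.1 y.1 && mmd e2 x.2 y.2.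
  move=> x y; rewrite /mmd !(md_prod es1 es2 hc1 hc2) /=.
  case h1: (max_distant e1 x.1 y.1); case h2: (max_distant e2 x.2 y.2);
  case h3: (max_distant e1 y.1 x.1); case h4: (max_distant e2 y.2 x.2);
  rewrite /= ?andbF ?andbT //.
  have n1 := md_neq hs1 hc1 hb1 h1; have n2 := md_neq hs2 hc2 hb2 h2.
  rewrite n1 n2; apply: contraNneq n1 => ->; done.
have cov : forall S, strong_resolving (cart_prod e1 e2) S <-> Cov (boundary e1) (boundary e2) S.
  move=> S; rewrite (sr_char (prod_sym es1 es2) (prod_con hc1 hc2)); split.
    move=> h x y n1 n2 xA yA xB yB; apply: h.
    by rewrite mmdp (mmd_bd hs1 hc1 hb1) (mmd_bd hs2 hc2 hb2) n1 n2 xA yA xB yB.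
  move=> h x y; rewrite mmdp (mmd_bd hs1 hc1 hb1) (mmd_bd hs2 hc2 hb2).
  case/andP=> /and3P [n1 xA yA] /and3P [n2 xB yB]; exact: h.
have hT : strong_resolving (cart_prod e1 e2) setT.
  by apply/cov => x y *; rewrite inE.
rewrite /sdim; case: (arg_minnP (fun S : {set T1 * T2} => #|S|) hT) => S hS hmin.
apply/eqP; rewrite eqn_leq; apply/andP; split.
  have [S1 cS1 eS1] := cover_up1 (boundary e1) (boundary e2).
  have [S2 cS2 eS2] := cover_up2 (boundary e1) (boundary e2).
  rewrite leq_min; apply/andP; split.
    by rewrite -eS1; apply: hmin; apply/cov.
  by rewrite -eS2; apply: hmin; apply/cov.
by apply: cover_lower; apply/cov.
Qed.
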